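(* A pomset language $\mathcal U\subseteq\mathsf{Pom}^{\mathsf{sp}}$ is accepted by some finite pomset automaton (i.e., $\mathcal U=L_A(q)$ for some finite PA $A$ and state $q$ of $A$) if and only if $\mathcal U$ is context-free.
   Context: Fix a finite alphabet $\Sigma$. Pomsets are isomorphism classes of $\Sigma$-labelled posets; $1$ is the empty pomset, $a\in\Sigma$ the one-point pomset. $U\cdot V$ is the disjoint union with every element of $U$ below every element of $V$; $U\parallel V$ the disjoint union with no added order. $\mathsf{Pom}^{\mathsf{sp}}$ is the smallest set containing $1$ and all $a$ closed under $\cdot,\parallel$. A PA is $A=\langle Q,\delta,\gamma,F\rangle$ with $F\subseteq Q$, $\delta:Q\times\Sigma\to Q$, $\gamma:Q^3\to Q$, containing states $\bot\notin F$, $\top\in F$ with $\delta(\bot,a)=\delta(\top,a)=\bot$ and $\gamma(\bot,r,s)=\gamma(\top,r,s)=\bot$; it is finite if $Q$ is finite. Traces $\to_A\subseteq Q\times\mathsf{Pom}^{\mathsf{sp}}\times Q$: smallest relation with $q\xrightarrow{1}_A q$; $q\xrightarrow{a}_A\delta(q,a)$; $q\xrightarrow{U}_A q''\xrightarrow{V}_A q'$ implies $q\xrightarrow{U\cdot V}_A q'$; $r\xrightarrow{U}_A r'\in F$, $s\xrightarrow{V}_A s'\in F$ imply $q\xrightarrow{U\parallel V}_A\gamma(q,r,s)$. $L_A(q)=\{U:\exists q'\in F.\ q\xrightarrow{U}_A q'\}$. A context-free pomset grammar is a triple $G=\langle\Gamma,S,R\rangle$ with $\Gamma$ a finite set of non-terminals,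 $S\in\Gamma$ the start symbol, and $R$ a finite set of production rules, each a pair of a non-terminal and a term built from symbols in $\Gamma\cup\Sigma\cup\{\epsilon\}$ using binary sequential products $\cdot$ and parallel products $\parallel$. Derivations rewrite occurrences of non-terminals by right-hand sides of rules as usual, starting from $S$; a derived term containing no non-terminals denotes a series-parallel pomset (interpreting $\epsilon$ as $1$, $a$ as the primitive pomset, and $\cdot,\parallel$ as pomset compositions). $[\![G]\!]$ is the set of pomsets so derived, and a pomset language is context-free if it equals $[\![G]\!]$ for some such $G$. *)

(* Defs.v *)
From Stdlib Require List.
From mathcomp Require Import all_boot.
Set Implicit Arguments. Unset Strict Implicit. Unset Printing Implicit Defensive.

Section Pomsets.
Variable Sigma : Type.

(** Finite labelled relational structures; a pomset is the isomorphism class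
    of a labelled poset.  Pomset languages are represented as predicates on
    representatives that are closed under isomorphism. *)
Record lpo := Lpo { lsize : nat; llab : 'I_lsize -> Sigma; lord : rel 'I_lsize }.

Definition lpo_iso (P Q : lpo) : Prop :=
  exists f : 'I_(lsize P) -> 'I_(lsize Q),
    bijective f /\ (forall x, @llab Q (f x) = @llab P x)
    /\ (forall x y, @lord Q (f x) (f y) = @lord P x y).

Definition is_pomset (P : lpo) : Prop :=
  reflexive (@lord P) /\ antisymmetric (@lord P) /\ transitive (@lord P).

Definition empty_lab (i : 'I_0) : Sigma. Proof. by case: i. Defined.

Definition pom_one : lpo := @Lpo 0 empty_lab (fun _ _ => true).

Definition pom_atom (a : Sigma) : lpo := @Lpo 1 (fun _ => a) (fun _ _ => true).

Definition sum_lab (P Q : lpo) (i : 'I_(lsize P + lsize Q)) : Sigma :=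
  match split i with inl j => @llab P j | inr k => @llab Q k end.

Definition pom_seq (P Q : lpo) : lpo :=
  @Lpo (lsize P + lsize Q) (@sum_lab P Q)
    (fun i j => match split i, split j with
                | inl a, inl b => @lord P a b
                | inr a, inr b => @lord Q a b
                | inl _, inr _ => true
                | inr _, inl _ => false end).

Definition pom_par (P Q : lpo) : lpo :=
  @Lpo (lsize P + lsize Q) (@sum_lab P Q)
    (fun i j => match split i, split j with
                | inl a, inl b => @lord P a b
                | inr a, inr b => @lord Q a b
                | _, _ => false end).

Inductive is_sp : lpo -> Prop :=
| sp_iso P Q : is_sp P -> lpo_iso P Q -> is_sp Q
| sp_one : is_sp pom_one
| sp_atom a : is_sp (pom_atom a)
| sp_seq P Q : is_sp P -> is_sp Q -> is_sp (pom_seq P Q)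
| sp_par P Q : is_sp P -> is_sp Q -> is_sp (pom_par P Q).

End Pomsets.

Record PA (Sigma : Type) (Q : Type) := MkPA {
  pa_delta : Q -> Sigma -> Q;
  pa_gamma : Q -> Q -> Q -> Q;
  pa_F : Q -> Prop;
  pa_bot : Q;
  pa_top : Q;
  pa_bot_notF : ~ pa_F pa_bot;
  pa_top_F : pa_F pa_top;
  pa_delta_bot : forall a, pa_delta pa_bot a = pa_bot;
  pa_delta_top : forall a, pa_delta pa_top a = pa_bot;
  pa_gamma_bot : forall r s, pa_gamma pa_bot r s = pa_bot;
  pa_gamma_top : forall r s, pa_gamma pa_top r s = pa_bot }.

Inductive pa_trace (Sigma Q : Type) (A : PA Sigma Q) : Q -> lpo Sigma -> Q -> Prop :=
| tr_one q P : lpo_iso P (pom_one Sigma) -> pa_trace A q P q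
| tr_atom q a P : lpo_iso P (pom_atom a) -> pa_trace A q P (pa_delta A q a)
| tr_seq q q'' q' U V P : pa_trace A q U q'' -> pa_trace A q'' V q' ->
    lpo_iso P (pom_seq U V) -> pa_trace A q P q'
| tr_par q r r' s s' U V P : pa_trace A r U r' -> pa_F A r' ->
    pa_trace A s V s' -> pa_F A s' ->
    lpo_iso P (pom_par U V) -> pa_trace A q P (pa_gamma A q r s).

Definition pa_lang (Sigma Q : Type) (A : PA Sigma Q) (q : Q) (P : lpo Sigma) : Prop :=
  exists q', pa_F A q' /\ pa_trace A q P q'.

Inductive gterm (Gamma Sigma : Type) :=
| GNT of Gamma
| GLet of Sigma
| GEps
| GSeq of gterm Gamma Sigma & gterm Gamma Sigma
| GPar of gterm Gamma Sigma & gterm Gamma Sigma.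
Arguments GEps {Gamma Sigma}.

Record grammar (Sigma : Type) := MkGrammar {
  g_NT : finType;
  g_start : g_NT;
  g_rules : list (g_NT * gterm g_NT Sigma) }.

Inductive gstep (Gamma Sigma : Type) (R : list (Gamma * gterm Gamma Sigma)) :
  gterm Gamma Sigma -> gterm Gamma Sigma -> Prop :=
| gs_rule X t : List.In (X, t) R -> gstep R (GNT _ X) t
| gs_seql t1 t1' t2 : gstep R t1 t1' -> gstep R (GSeq t1 t2) (GSeq t1' t2)
| gs_seqr t1 t2 t2' : gstep R t2 t2' -> gstep R (GSeq t1 t2) (GSeq t1 t2')
| gs_parl t1 t1' t2 : gstep R t1 t1' -> gstep R (GPar t1 t2) (GPar t1' t2)
| gs_parr t1 t2 t2' : gstep R t2 t2' -> gstep R (GPar t1 t2) (GPar t1 t2').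

Inductive gderiv (Gamma Sigma : Type) (R : list (Gamma * gterm Gamma Sigma)) :
  gterm Gamma Sigma -> gterm Gamma Sigma -> Prop :=
| gd_refl t : gderiv R t t
| gd_step t1 t2 t3 : gstep R t1 t2 -> gderiv R t2 t3 -> gderiv R t1 t3.

Fixpoint gground (Gamma Sigma : Type) (t : gterm Gamma Sigma) : Prop :=
  match t with
  | GNT _ => False
  | GLet _ | GEps => True
  | GSeq t1 t2 | GPar t1 t2 => gground t1 /\ gground t2
  end.

(** denotation of a term (only meaningful on ground terms) *)
Fixpoint gsem (Gamma Sigma : Type) (t : gterm Gamma Sigma) : lpo Sigma :=
  match t with
  | GNT _ => pom_one Sigma
  | GLet a => pom_atom a
  | GEps => pom_one Sigma
  | GSeq t1 t2 => pom_seq (gsem t1) (gsem t2)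
  | GPar t1 t2 => pom_par (gsem t1) (gsem t2)
  end.

Definition glang (Sigma : Type) (G : grammar Sigma) (P : lpo Sigma) : Prop :=
  exists t, gderiv (g_rules G) (GNT _ (g_start G)) t /\ gground t /\
            lpo_iso P (gsem t).

(* Main.v *)
From HB Require Import structures.
Require Import Defs.
From mathcomp Require Import all_boot.
From Stdlib Require Import ClassicalEpsilon.
Set Implicit Arguments. Unset Strict Implicit. Unset Printing Implicit Defensive.

Section Iso.
Variable Sigma : Type.
Implicit Types P Q U V W : lpo Sigma.

Lemma split_l m n (j : 'I_m) : split (lshift n j) = inl j.
Proof. exact: (unsplitK (inl _ j)). Qed.
Lemma split_r m n (j : 'I_n) : split (rshift m j) = inr j.
Proof. exact: (unsplitK (inr _ j)). Qed.

Definition ord0_elim T (a : 'I_0) : T := False_rect T (Bool.diff_false_true (ltn_ord a)).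

Lemma iso_refl P : lpo_iso P P.
Proof. exists id; split; first exact: (Bijective (g:=id)). by []. Qed.

Lemma iso_sym P Q : lpo_iso P Q -> lpo_iso Q P.
Proof.
move=> [f [[g fg gf] [fl fo]]]; exists g; split; first exact: (Bijective gf fg).
split=> [x|x y]; first by rewrite -fl gf.
by rewrite -fo !gf.
Qed.

Lemma iso_trans P Q W : lpo_iso P Q -> lpo_iso Q W -> lpo_iso P W.
Proof.
move=> [f [fb [fl fo]]] [h [hb [hl ho]]]; exists (h \o f); split.
  exact: bij_comp.
by split=> [x|x y]; rewrite /= ?hl ?fl ?ho ?fo.
Qed.

Ltac cs i := let E := fresh "E" in case E: (split i).

Lemma iso_seq P P' Q Q' : lpo_iso P P' -> lpo_iso Q Q' ->
  lpo_iso (pom_seq P Q) (pom_seq P' Q').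
Proof.
move=> [f [[g fg gf] [fl fo]]] [h [[k hk kh] [hl ho]]].
exists (fun i => match split i with inl a => lshift _ (f a) | inr b => rshift _ (h b) end).
split.
  exists (fun i => match split i with inl a => lshift _ (g a) | inr b => rshift _ (k b) end).
    by move=> i; case E: (split i) => [a|b]; rewrite ?split_l ?split_r ?fg ?hk -[RHS]splitK E.
  by move=> i; case E: (split i) => [a|b]; rewrite ?split_l ?split_r ?gf ?kh -[RHS]splitK E.
split.
  by move=> i; rewrite /= /sum_lab; case E: (split i) => [a|b]; rewrite ?split_l ?split_r.
move=> i j /=; case E: (split i) => [a|b]; case E': (split j) => [c|d];
  by rewrite ?split_l ?split_r.
Qed.

Lemma iso_par P P' Q Q' : lpo_iso P P' -> lpo_iso Q Q' ->
  lpo_iso (pom_par P Q) (pom_par P' Q').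
Proof.
move=> [f [[g fg gf] [fl fo]]] [h [[k hk kh] [hl ho]]].
exists (fun i => match split i with inl a => lshift _ (f a) | inr b => rshift _ (h b) end).
split.
  exists (fun i => match split i with inl a => lshift _ (g a) | inr b => rshift _ (k b) end).
    by move=> i; case E: (split i) => [a|b]; rewrite ?split_l ?split_r ?fg ?hk -[RHS]splitK E.
  by move=> i; case E: (split i) => [a|b]; rewrite ?split_l ?split_r ?gf ?kh -[RHS]splitK E.
split.
  by move=> i; rewrite /= /sum_lab; case E: (split i) => [a|b]; rewrite ?split_l ?split_r.
move=> i j /=; case E: (split i) => [a|b]; case E': (split j) => [c|d];
  by rewrite ?split_l ?split_r.
Qed.

Lemma seq_1l P : lpo_iso (pom_seq (pom_one Sigma) P) P.
Proof.
exists (fun i => match split i with inl a => ord0_elim _ a | inr b => b end).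
split.
  exists (fun b => rshift 0 b).
    by move=> i; case E: (split i) => [a|b]; [exact: (ord0_elim _ a)|rewrite -[RHS]splitK E].
  by move=> b; rewrite split_r.
split.
  by move=> i; rewrite /= /sum_lab; case E: (split i) => [a|b]; [exact: (ord0_elim _ a)|].
by move=> i j /=; case E: (split i) => [a|b]; [exact: (ord0_elim _ a)|]; case E': (split j) => [c|d]; [exact: (ord0_elim _ c)|].
Qed.

Lemma seq_1r P : lpo_iso (pom_seq P (pom_one Sigma)) P.
Proof.
exists (fun i => match split i with inl a => a | inr b => ord0_elim _ b end).
split.
  exists (fun b => lshift 0 b).
    by move=> i; case E: (split i) => [a|b]; [rewrite -[RHS]splitK E|exact: (ord0_elim _ b)].
  by move=> b; rewrite split_l.
split.
  by move=> i; rewrite /= /sum_lab; case E: (split i) => [a|b]; [|exact: (ord0_elim _ b)].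
by move=> i j /=; case E: (split i) => [a|b]; [|exact: (ord0_elim _ b)]; case E': (split j) => [c|d]; [|exact: (ord0_elim _ d)].
Qed.

Lemma par_1r P : lpo_iso (pom_par P (pom_one Sigma)) P.
Proof.
exists (fun i => match split i with inl a => a | inr b => ord0_elim _ b end).
split.
  exists (fun b => lshift 0 b).
    by move=> i; case E: (split i) => [a|b]; [rewrite -[RHS]splitK E|exact: (ord0_elim _ b)].
  by move=> b; rewrite split_l.
split.
  by move=> i; rewrite /= /sum_lab; case E: (split i) => [a|b]; [|exact: (ord0_elim _ b)].
by move=> i j /=; case E: (split i) => [a|b]; [|exact: (ord0_elim _ b)]; case E': (split j) => [c|d]; [|exact: (ord0_elim _ d)].
Qed.

Lemma seq_assoc U V W :
  lpo_iso (pom_seq (pom_seq U V) W) (pom_seq U (pom_seq V W)).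
Proof.
pose F (i : 'I_(lsize U + lsize V + lsize W)) : 'I_(lsize U + (lsize V + lsize W)) :=
  match split i with
  | inl a => match split a with inl x => lshift _ x | inr y => rshift _ (lshift _ y) end
  | inr z => rshift _ (rshift _ z) end.
pose G (j : 'I_(lsize U + (lsize V + lsize W))) : 'I_(lsize U + lsize V + lsize W) :=
  match split j with
  | inl x => lshift _ (lshift _ x)
  | inr w => match split w with inl y => lshift _ (rshift _ y) | inr z => rshift _ z end end.
exists F; split.
  exists G.
    move=> i; rewrite /F /G; case E: (split i) => [a|z]; last first.
      by rewrite !split_r -[RHS]splitK E.
    case E': (split a) => [x|y]; rewrite ?split_l ?split_r ?split_l -[RHS]splitK E;
      by rewrite -[a in RHS]splitK E'.
  move=> j; rewrite /F /G; case E: (split j) => [x|w].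
    by rewrite !split_l -[RHS]splitK E.
  case E': (split w) => [y|z]; rewrite ?split_l ?split_r ?split_l -[RHS]splitK E;
    by rewrite -[w in RHS]splitK E'.
split.
  move=> i; rewrite /= /sum_lab /F; case E: (split i) => [a|z].
    by case E': (split a) => [x|y]; rewrite ?split_l ?split_r /= /sum_lab ?split_l E'.
  by rewrite ?split_l ?split_r //= /sum_lab ?split_l ?split_r.
move=> i j; rewrite /= /F.
case E: (split i) => [a|z]; case E': (split j) => [c|d].
- case E1: (split a) => [x|y]; case E2: (split c) => [u|v];
  by rewrite ?split_l ?split_r ?split_l ?split_r.
- case E1: (split a) => [x|y]; by rewrite ?split_l ?split_r ?split_l ?split_r.
- case E2: (split c) => [u|v]; by rewrite ?split_l ?split_r ?split_l ?split_r.
- by rewrite ?split_l ?split_r ?split_l ?split_r.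
Qed.

End Iso.

Section Gram.
Variables (Gamma Sigma : Type) (R : list (Gamma * gterm Gamma Sigma)).

Inductive Der : gterm Gamma Sigma -> lpo Sigma -> Prop :=
| D_let a : Der (GLet _ a) (pom_atom a)
| D_eps : Der GEps (pom_one Sigma)
| D_seq t1 t2 P1 P2 : Der t1 P1 -> Der t2 P2 -> Der (GSeq t1 t2) (pom_seq P1 P2)
| D_par t1 t2 P1 P2 : Der t1 P1 -> Der t2 P2 -> Der (GPar t1 t2) (pom_par P1 P2)
| D_nt X t P : List.In (X, t) R -> Der t P -> Der (GNT _ X) P.

Lemma ground_Der t : gground t -> Der t (gsem t).
Proof.
elim: t => //= [a|_|t1 IH1 t2 IH2 [h1 h2]|t1 IH1 t2 IH2 [h1 h2]].
- constructor.
- constructor.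
- by constructor; auto.
- by constructor; auto.
Qed.

Lemma step_Der t1 t2 P : gstep R t1 t2 -> Der t2 P -> Der t1 P.
Proof.
move=> H; elim: H P => {t1 t2}.
- by move=> X t Hin P D; apply: D_nt Hin D.
- by move=> t1 t1' t2 _ IH P D; inversion D; subst; apply: D_seq => //; apply: IH.
- by move=> t1 t2 t2' _ IH P D; inversion D; subst; apply: D_seq => //; apply: IH.
- by move=> t1 t1' t2 _ IH P D; inversion D; subst; apply: D_par => //; apply: IH.
- by move=> t1 t2 t2' _ IH P D; inversion D; subst; apply: D_par => //; apply: IH.
Qed.

Lemma deriv_Der t g : gderiv R t g -> gground g -> Der t (gsem g).
Proof.
elim=> [u|u1 u2 u3 s _ IH] hg; first exact: ground_Der.
exact: (step_Der s (IH hg)).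
Qed.

Lemma gderiv_trans t1 t2 t3 : gderiv R t1 t2 -> gderiv R t2 t3 -> gderiv R t1 t3.
Proof. elim=> // u1 u2 u3 s _ IH h; exact: gd_step s (IH h). Qed.

Lemma gderiv_seql t1 t1' t2 : gderiv R t1 t1' -> gderiv R (GSeq t1 t2) (GSeq t1' t2).
Proof. elim=> [u|u1 u2 u3 s _ IH]; [exact: gd_refl| exact: gd_step (gs_seql _ s) IH]. Qed.
Lemma gderiv_seqr t1 t2 t2' : gderiv R t2 t2' -> gderiv R (GSeq t1 t2) (GSeq t1 t2').
Proof. elim=> [u|u1 u2 u3 s _ IH]; [exact: gd_refl| exact: gd_step (gs_seqr _ s) IH]. Qed.
Lemma gderiv_parl t1 t1' t2 : gderiv R t1 t1' -> gderiv R (GPar t1 t2) (GPar t1' t2).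
Proof. elim=> [u|u1 u2 u3 s _ IH]; [exact: gd_refl| exact: gd_step (gs_parl _ s) IH]. Qed.
Lemma gderiv_parr t1 t2 t2' : gderiv R t2 t2' -> gderiv R (GPar t1 t2) (GPar t1 t2').
Proof. elim=> [u|u1 u2 u3 s _ IH]; [exact: gd_refl| exact: gd_step (gs_parr _ s) IH]. Qed.

Lemma Der_deriv t P : Der t P -> exists g, gderiv R t g /\ gground g /\ gsem g = P.
Proof.
elim=> {t P}.
- by move=> a; exists (GLet _ a); do !split; exact: gd_refl.
- by exists GEps; do !split; exact: gd_refl.
- move=> t1 t2 P1 P2 _ [g1 [d1 [h1 e1]]] _ [g2 [d2 [h2 e2]]].
  exists (GSeq g1 g2); split; last by rewrite /= e1 e2.
  exact: gderiv_trans (gderiv_seql _ d1) (gderiv_seqr _ d2).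
- move=> t1 t2 P1 P2 _ [g1 [d1 [h1 e1]]] _ [g2 [d2 [h2 e2]]].
  exists (GPar g1 g2); split; last by rewrite /= e1 e2.
  exact: gderiv_trans (gderiv_parl _ d1) (gderiv_parr _ d2).
- move=> X t P Hin _ [g [d [h e]]]; exists g; split=> //.
  by apply: gd_step d; constructor.
Qed.

Definition Lang t P := exists P0, Der t P0 /\ lpo_iso P P0.

Lemma Lang_deriv t P : Lang t P <-> exists g, gderiv R t g /\ gground g /\ lpo_iso P (gsem g).
Proof.
split.
  move=> [P0 [D I]]; have [g [d [h e]]] := Der_deriv D.
  by exists g; rewrite e.
move=> [g [d [h I]]]; exists (gsem g); split=> //; exact: deriv_Der.
Qed.

End Gram.

Lemma glang_Lang Sigma (G : grammar Sigma) P :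
  glang G P <-> Lang (g_rules G) (GNT _ (g_start G)) P.
Proof. by rewrite Lang_deriv. Qed.

Lemma In_mem (T : eqType) (x : T) (s : seq T) : x \in s -> List.In x s.
Proof. by elim: s => //= y s IH; rewrite in_cons => /orP [/eqP ->|/IH]; auto. Qed.

Lemma In_enum (T : finType) (x : T) : List.In x (enum T).
Proof. by apply: In_mem; rewrite mem_enum. Qed.

Lemma trace_iso Sigma Q (A : PA Sigma Q) q P P0 q' :
  pa_trace A q P0 q' -> lpo_iso P P0 -> pa_trace A q P q'.
Proof.
case=> {q P0 q'}.
- move=> q P1 I I'; apply: tr_one; exact: iso_trans I' I.
- move=> q a P1 I I'; apply: tr_atom; exact: iso_trans I' I.
- move=> q q'' q' U V P1 h1 h2 I I'; apply: tr_seq h1 h2 _; exact: iso_trans I' I.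
- move=> q r r' s s' U V P1 h1 f1 h2 f2 I I'; apply: tr_par h1 f1 h2 f2 _; exact: iso_trans I' I.
Qed.

Section PA2G.
Variables (Sigma Q : finType) (A : PA Sigma Q) (q0 : Q).

Definition Fb (q : Q) : bool := if excluded_middle_informative (pa_F A q) then true else false.
Lemma FbP q : Fb q = true <-> pa_F A q.
Proof. by rewrite /Fb; case: excluded_middle_informative. Qed.

Definition NT := option (Q * Q).
Notation T := (gterm NT Sigma).
Definition eQ := enum Q.
Definition eS := enum Sigma.

Definition rules : list (NT * T) :=
  List.map (fun q' => (None, GNT _ (Some (q0, q')))) (List.filter Fb eQ)
  ++ List.map (fun p => (Some (p, p), GEps)) eQ
  ++ List.flat_map (fun p => List.map (fun a => (Some (p, pa_delta A p a), GLet _ a)) eS) eQ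
  ++ List.flat_map (fun p => List.flat_map (fun p' => List.map (fun p'' =>
        (Some (p, p'), GSeq (GNT _ (Some (p, p''))) (GNT _ (Some (p'', p'))))) eQ) eQ) eQ
  ++ List.flat_map (fun p => List.flat_map (fun r => List.flat_map (fun s =>
       List.flat_map (fun r' => List.map (fun s' =>
        (Some (p, pa_gamma A p r s), GPar (GNT _ (Some (r, r'))) (GNT _ (Some (s, s')))))
        (List.filter Fb eQ)) (List.filter Fb eQ)) eQ) eQ) eQ.

Fixpoint Sem (t : T) (P : lpo Sigma) : Prop :=
  match t with
  | GNT None => pa_lang A q0 P
  | GNT (Some (q, q')) => pa_trace A q P q'
  | GLet a => P = pom_atom a
  | GEps => P = pom_one Sigma
  | GSeq t1 t2 => exists P1 P2, P = pom_seq P1 P2 /\ Sem t1 P1 /\ Sem t2 P2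
  | GPar t1 t2 => exists P1 P2, P = pom_par P1 P2 /\ Sem t1 P1 /\ Sem t2 P2
  end.

Lemma inF q : List.In q (List.filter Fb eQ) <-> pa_F A q.
Proof. rewrite List.filter_In -FbP; split; [by case|split=> //; exact: In_enum]. Qed.

Lemma Der_Sem t P : Der rules t P -> Sem t P.
Proof.
elim=> {t P} //=.
- by move=> t1 t2 P1 P2 _ h1 _ h2; exists P1, P2.
- by move=> t1 t2 P1 P2 _ h1 _ h2; exists P1, P2.
move=> X t P Hin _; move: P.
rewrite /rules !List.in_app_iff in Hin.
case: Hin => [|[|[|[]]]].
- case/List.in_map_iff=> q' [[<- <-]] /inF Fq' P HS; by exists q'.
- case/List.in_map_iff=> p [[<- <-]] _ P /= ->.
  exact: tr_one (iso_refl _).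
- case/List.in_flat_map=> p [_ /List.in_map_iff [a [[<- <-]] _]] P /= ->.
  exact: tr_atom (iso_refl _).
- case/List.in_flat_map=> p [_ /List.in_flat_map [p' [_ /List.in_map_iff [p'' [[<- <-]] _]]]].
  move=> P /= [P1 [P2 [-> [h1 h2]]]]; exact: tr_seq h1 h2 (iso_refl _).
- case/List.in_flat_map=> p [_ /List.in_flat_map [r [_ /List.in_flat_map [s [_
    /List.in_flat_map [r' [/inF Fr' /List.in_map_iff [s' [[<- <-]] /inF Fs']]]]]]]].
  move=> P /= [P1 [P2 [-> [h1 h2]]]]; exact: tr_par h1 Fr' h2 Fs' (iso_refl _).
Qed.

Lemma rules_in X t : List.In (X, t) rules -> List.In (X, t) rules.
Proof. by []. Qed.

Lemma trace_Lang q P q' : pa_trace A q P q' -> Lang rules (GNT _ (Some (q, q'))) P.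
Proof.
elim=> {q P q'}.
- move=> q P I; exists (pom_one Sigma); split=> //.
  apply: D_nt; last exact: D_eps.
  rewrite /rules !List.in_app_iff; right; left.
  by apply/List.in_map_iff; exists q; split=> //; exact: In_enum.
- move=> q a P I; exists (pom_atom a); split=> //.
  apply: D_nt; last exact: D_let.
  rewrite /rules !List.in_app_iff; right; right; left.
  apply/List.in_flat_map; exists q; split; first exact: In_enum.
  by apply/List.in_map_iff; exists a; split=> //; exact: In_enum.
- move=> q q'' q' U V P _ [U0 [DU IU]] _ [V0 [DV IV]] I.
  exists (pom_seq U0 V0); split; last exact: iso_trans I (iso_seq IU IV).
  apply: D_nt; last exact: D_seq DU DV.
  rewrite /rules !List.in_app_iff; right; right; right; left.
  apply/List.in_flat_map; exists q; split; first exact: In_enum.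
  apply/List.in_flat_map; exists q'; split; first exact: In_enum.
  by apply/List.in_map_iff; exists q''; split=> //; exact: In_enum.
- move=> q r r' s s' U V P _ [U0 [DU IU]] Fr' _ [V0 [DV IV]] Fs' I.
  exists (pom_par U0 V0); split; last exact: iso_trans I (iso_par IU IV).
  apply: D_nt; last exact: D_par DU DV.
  rewrite /rules !List.in_app_iff; right; right; right; right.
  apply/List.in_flat_map; exists q; split; first exact: In_enum.
  apply/List.in_flat_map; exists r; split; first exact: In_enum.
  apply/List.in_flat_map; exists s; split; first exact: In_enum.
  apply/List.in_flat_map; exists r'; split; first exact/inF.
  by apply/List.in_map_iff; exists s'; split=> //; exact/inF.
Qed.

Definition G_of : grammar Sigma := @MkGrammar Sigma (option (Q * Q))%type None rules.

Lemma G_of_correct P : pa_lang A q0 P <-> glang G_of P.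
Proof.
rewrite glang_Lang /=; split.
  move=> [q' [Fq' tr]]; have [P0 [D I]] := trace_Lang tr.
  exists P0; split=> //; apply: D_nt D.
  rewrite /rules !List.in_app_iff; left.
  by apply/List.in_map_iff; exists q'; split=> //; exact/inF.
move=> [P0 [D I]]; have [q' [Fq' tr]] := Der_Sem D.
by exists q'; split=> //; exact: trace_iso tr I.
Qed.

End PA2G.

Section GtEq.
Variables (Gamma Sigma : eqType).
Fixpoint gt_eqb (t u : gterm Gamma Sigma) : bool :=
  match t, u with
  | GNT x, GNT y => x == y
  | GLet a, GLet b => a == b
  | GEps, GEps => true
  | GSeq a b, GSeq c d => gt_eqb a c && gt_eqb b d
  | GPar a b, GPar c d => gt_eqb a c && gt_eqb b d
  | _, _ => false
  end.
Lemma gt_eqP : Equality.axiom gt_eqb.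
Proof.
elim=> [x|a||a IHa b IHb|a IHa b IHb] [y|c||c d|c d] /=; try by constructor.
- by apply: (iffP eqP) => [->|[]].
- by apply: (iffP eqP) => [->|[]].
- by apply: (iffP andP) => [[/IHa -> /IHb ->]|[<- <-]]; split; [apply/IHa|apply/IHb].
- by apply: (iffP andP) => [[/IHa -> /IHb ->]|[<- <-]]; split; [apply/IHa|apply/IHb].
Qed.
End GtEq.
HB.instance Definition _ (Gamma Sigma : eqType) :=
  hasDecEq.Build (gterm Gamma Sigma) (@gt_eqP Gamma Sigma).

Lemma mem_In (T : eqType) (x : T) (s : seq T) : List.In x s -> x \in s.
Proof. by elim: s => //= y s IH [->|/IH]; rewrite in_cons ?eqxx // => ->; rewrite orbT. Qed.

Section G2PA.
Variables (Sigma : finType) (G : grammar Sigma).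
Notation Gamma := (g_NT G).
Notation T := (gterm Gamma Sigma).
Notation R := (g_rules G).

Fixpoint subterms (t : T) : seq T :=
  t :: match t with GSeq a b | GPar a b => subterms a ++ subterms b | _ => [::] end.

Lemma sub_self t : t \in subterms t.
Proof. by case: t => *; rewrite /= mem_head. Qed.

Lemma sub_trans t u v : u \in subterms t -> v \in subterms u -> v \in subterms t.
Proof.
elim: t => [x|a||a IHa b IHb|a IHa b IHb] /=; rewrite ?in_cons ?in_nil ?orbF;
  try (by move/eqP=> ->; rewrite /= in_cons in_nil orbF);
  (case/orP=> [/eqP -> // | ]; rewrite mem_cat => /orP [h|h] hv;
   apply/orP; right; rewrite ?mem_cat; apply/orP;
   [left; exact: IHa h hv | right; exact: IHb h hv]).
Qed.

Definition roots : seq T := GNT _ (g_start G) :: [seq rt.2 | rt <- R].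
Definition L : seq T := flatten [seq subterms u | u <- roots].

Lemma inL_sub t u : t \in L -> u \in subterms t -> u \in L.
Proof.
move=> /flatten_mapP [w hw ht] hu; apply/flatten_mapP; exists w => //.
exact: sub_trans ht hu.
Qed.
Lemma inL_seq t1 t2 : GSeq t1 t2 \in L -> t1 \in L /\ t2 \in L.
Proof.
by move=> h; split; apply: inL_sub h _; rewrite /= in_cons mem_cat sub_self ?orbT.
Qed.
Lemma inL_par t1 t2 : GPar t1 t2 \in L -> t1 \in L /\ t2 \in L.
Proof.
by move=> h; split; apply: inL_sub h _; rewrite /= in_cons mem_cat sub_self ?orbT.
Qed.
Lemma inL_start : GNT _ (g_start G) \in L.
Proof. by apply/flatten_mapP; exists (GNT _ (g_start G)); rewrite ?mem_head ?sub_self. Qed.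
Lemma inL_rule X t : List.In (X, t) R -> t \in L.
Proof.
move=> h; apply/flatten_mapP; exists t; last exact: sub_self.
by rewrite /roots in_cons; apply/orP; right; apply: (map_f (fun rt => rt.2) (mem_In h)).
Qed.

Definition n := size L.
Definition St := option (option 'I_n).
Definition term_of (i : 'I_n) : T := nth GEps L i.
Definition st (t : T) : St :=
  match (insub (index t L) : option 'I_n) with Some i => Some (Some i) | None => None end.

Lemma st_some t i : st t = Some (Some i) -> term_of i = t.
Proof.
rewrite /st; case: insubP => [j hlt hv [<-]|_ //].
by rewrite /term_of hv nth_index // -index_mem.
Qed.
Lemma st_in t : t \in L -> exists i, st t = Some (Some i).
Proof. by move=> h; rewrite /st insubT ?index_mem //; eexists. Qed.
Lemma st_top t : st t <> Some None.
Proof. by rewrite /st; case: insub. Qed.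

Definition delta (q : St) (a : Sigma) : St :=
  match q with
  | Some (Some i) => match term_of i with GLet b => if b == a then Some None else None | _ => None end
  | _ => None end.
Definition gamma (q r s : St) : St :=
  match q with
  | Some (Some i) => match term_of i with
    | GSeq t1 t2 => if (r == st t1) && (s == Some None) then st t2 else None
    | GPar t1 t2 => if (r == st t1) && (s == st t2) then Some None else None
    | GNT X => if (s == Some None) && has (fun rt => (rt.1 == X) && (r == st rt.2)) R
               then Some None else None
    | _ => None end
  | _ => None end.
Definition Fin (q : St) : Prop := q = Some None \/ exists i, q = Some (Some i) /\ term_of i = GEps.

Lemma Fin_bot : ~ Fin None. Proof. by case=> // [[i []]]. Qed.
Lemma Fin_top : Fin (Some None). Proof. by left. Qed.

Definition A : PA Sigma St :=
  @MkPA Sigma St delta gamma Fin None (Some None) Fin_bot Fin_top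
    (fun a => erefl) (fun a => erefl) (fun r s => erefl) (fun r s => erefl).

Definition D (q : St) (P : lpo Sigma) : Prop :=
  match q with
  | None => False
  | Some None => lpo_iso P (pom_one Sigma)
  | Some (Some i) => Lang R (term_of i) P end.

Lemma Lang_iso t P P0 : Lang R t P0 -> lpo_iso P P0 -> Lang R t P.
Proof. by move=> [P1 [d I]] I'; exists P1; split=> //; exact: iso_trans I' I. Qed.

Lemma D_iso q P P0 : D q P0 -> lpo_iso P P0 -> D q P.
Proof.
case: q => [[i|]|] //= h I; [exact: Lang_iso h I|exact: iso_trans I h].
Qed.

Lemma D_st t P : D (st t) P -> Lang R t P.
Proof.
case E: (st t) => [[i|]|] //=; last by move: (st_top (t:=t)); rewrite E.
by rewrite (st_some E).
Qed.

Lemma D_F q : Fin q -> D q (pom_one Sigma).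
Proof.
case=> [->|[i [-> e]]] /=; first exact: iso_refl.
by rewrite e; exists (pom_one Sigma); split; [constructor|exact: iso_refl].
Qed.

Lemma iso_U1 U : lpo_iso (pom_seq U (pom_one Sigma)) (pom_one Sigma) ->
  lpo_iso U (pom_one Sigma).
Proof. move=> h; exact: iso_trans (iso_sym (seq_1r U)) h. Qed.

Lemma has_In (X : Gamma) r : has (fun rt => (rt.1 == X) && (r == st rt.2)) R ->
  exists t, List.In (X, t) R /\ r = st t.
Proof.
case/hasP=> [[X' t] hin /andP [/eqP /= e /eqP ->]]; exists t; split=> //.
by rewrite -e; apply: In_mem.
Qed.

Lemma trace_D q P q' : pa_trace A q P q' ->
  forall P', D q' P' -> D q (pom_seq P P').
Proof.
elim=> {q P q'}.
- move=> q P I P' h; apply: D_iso h _.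
  exact: iso_trans (iso_seq I (iso_refl _)) (seq_1l _).
- move=> q a P I P'.
  case: q => [[i|]|] //=; rewrite /delta.
  case E: (term_of i) => [x|b||t1 t2|t1 t2] //; case: eqP => // eba /= h; subst b.
  exists (pom_atom a); split; first constructor.
  exact: iso_trans (iso_seq I h) (seq_1r _).
- move=> q q'' q' U V P _ IH1 _ IH2 I P' h.
  apply: D_iso (IH1 _ (IH2 _ h)) _.
  exact: iso_trans (iso_seq I (iso_refl _)) (seq_assoc _ _ _).
- move=> q r r' s s' U V P _ IHU Fr' _ IHV Fs' I P'.
  have DU := IHU _ (D_F Fr'); have DV := IHV _ (D_F Fs').
  case: q => [[i|]|] //=; rewrite /gamma.
  case E: (term_of i) => [X|b||t1 t2|t1 t2] //.
  + case: ifP => // /andP [/eqP es hh] h.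
    have [t [hin er]] := has_In hh; subst r s.
    move: DU DV => /D_st [U0 [dU IU]] /= DV.
    exists U0; split; first exact: D_nt hin dU.
    apply: iso_trans (iso_seq I h) _; apply: iso_trans (seq_1r _) _.
    apply: iso_trans (iso_par (iso_refl _) (iso_U1 DV)) _.
    apply: iso_trans (par_1r _) _.
    exact: iso_trans (iso_sym (seq_1r _)) IU.
  + case: ifP => // /andP [/eqP er /eqP es] /D_st [P0 [dP IP]].
    move: DU DV; rewrite er es => /D_st [U0 [dU IU]] /= DV.
    exists (pom_seq U0 P0); split; first exact: D_seq.
    apply: iso_seq IP.
    apply: iso_trans I _.
    apply: iso_trans (iso_par (iso_refl _) (iso_U1 DV)) _.
    apply: iso_trans (par_1r _) _.
    exact: iso_trans (iso_sym (seq_1r _)) IU.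
  + case: ifP => // /andP [/eqP er /eqP es] /= h.
    move: DU DV; rewrite er es => /D_st [U0 [dU IU]] /D_st [V0 [dV IV]].
    exists (pom_par U0 V0); split; first exact: D_par.
    apply: iso_trans (iso_seq I h) _; apply: iso_trans (seq_1r _) _.
    apply: iso_par.
      exact: iso_trans (iso_sym (seq_1r _)) IU.
    exact: iso_trans (iso_sym (seq_1r _)) IV.
Qed.

Lemma sound t P : pa_lang A (st t) P -> Lang R t P.
Proof.
move=> [q' [Fq' tr]]; apply: D_st; apply: D_iso (trace_D tr (D_F Fq')) _.
exact: iso_sym (seq_1r _).
Qed.

Lemma complete t P : Der R t P -> t \in L -> pa_lang A (st t) P.
Proof.
elim=> {t P}.
- move=> a /st_in [i e]; exists (Some None); split; first exact: Fin_top.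
  have := tr_atom A (st (GLet _ a)) (iso_refl (pom_atom a)).
  by rewrite /= e /delta (st_some e) eqxx.
- move=> /st_in [i e]; exists (st GEps); split; last exact: tr_one (iso_refl _).
  by right; exists i; rewrite e (st_some e).
- move=> t1 t2 P1 P2 _ IH1 _ IH2 hL; have [h1 h2] := inL_seq hL.
  have [r' [Fr' tr1]] := IH1 h1; have [q' [Fq' tr2]] := IH2 h2.
  exists q'; split=> //.
  have [i e] := st_in hL.
  have tp := tr_par (st (GSeq t1 t2)) tr1 Fr' (tr_one A (Some None) (iso_refl _)) Fin_top
     (iso_refl (pom_par P1 (pom_one Sigma))).
  move: tp; rewrite /= e /gamma (st_some e) !eqxx /= => tp.
  apply: tr_seq tp tr2 _.
  exact: iso_seq (iso_sym (par_1r _)) (iso_refl _).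
- move=> t1 t2 P1 P2 _ IH1 _ IH2 hL; have [h1 h2] := inL_par hL.
  have [r' [Fr' tr1]] := IH1 h1; have [s' [Fs' tr2]] := IH2 h2.
  exists (Some None); split; first exact: Fin_top.
  have [i e] := st_in hL.
  have tp := tr_par (st (GPar t1 t2)) tr1 Fr' tr2 Fs' (iso_refl _).
  by move: tp; rewrite /= e /gamma (st_some e) !eqxx.
- move=> X t P hin _ IH hL.
  have [r' [Fr' tr1]] := IH (inL_rule hin).
  exists (Some None); split; first exact: Fin_top.
  have [i e] := st_in hL.
  have tp := tr_par (st (GNT _ X)) tr1 Fr' (tr_one A (Some None) (iso_refl _)) Fin_top
     (iso_sym (par_1r P)).
  move: tp; rewrite /= e /gamma (st_some e) eqxx /=.
  have -> // : has (fun rt => (rt.1 == X) && (st t == st rt.2)) R.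
  by apply/hasP; exists (X, t); [exact: mem_In|rewrite /= !eqxx].
Qed.

Lemma A_correct P : pa_lang A (st (GNT _ (g_start G))) P <-> glang G P.
Proof.
rewrite glang_Lang; split; first exact: sound.
move=> [P0 [d I]]; have [q' [Fq' tr]] := complete d inL_start.
by exists q'; split=> //; exact: trace_iso tr I.
Qed.

End G2PA.

Theorem mainTheorem3 (Sigma : finType) (U : lpo Sigma -> Prop)
  (U_iso : forall P Q, lpo_iso P Q -> U P -> U Q)
  (U_sp : forall P, U P -> is_sp P) :
  (exists (Q : finType) (A : PA Sigma Q) (q : Q),
      forall P, U P <-> pa_lang A q P)
  <->
  (exists G : grammar Sigma, forall P, U P <-> glang G P).
Proof.
split.
- move=> [Q [A0 [q H]]]; exists (G_of A0 q) => P.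
  by rewrite H; exact: G_of_correct.
- move=> [G H].
  exists (option (option 'I_(n G)))%type, (A G), (st (GNT _ (g_start G))) => P.
  by rewrite H; split => /A_correct.
Qed.
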